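(* Let $(X, A, \rightarrow)$ be a labelled transition system with finite state set $X$ and a distinguished silent action $\tau \in A$. For all $x, y \in X$: $x \mathrel{\#_b} y$ (i.e. $x$ and $y$ are branching apart) if and only if the configuration $[x,y]$ is winning for Spoiler in the branching bisimulation game.
   Context: Write $x \Longrightarrow x'$ if there is a (possibly empty) sequence of $\tau$-transitions from $x$ to $x'$, and $x \xrightarrow{(\alpha)} x'$ if either $x \xrightarrow{\alpha} x'$, or $\alpha = \tau$ and $x = x'$. A branching apartness relation is a symmetric relation $R \subseteq X \times X$ such that whenever $x \xrightarrow{\alpha} x'$ and for all $y', y''$ with $y \Longrightarrow y' \xrightarrow{(\alpha)} y''$ we have $x \mathrel R y'$ or $x' \mathrel R y''$, then $x \mathrel R y$. States are branching apart, $x \mathrel{\#_b} y$, iff they are related by every branching apartness relation. Branching bisimulation game: Spoiler configurations are $[x,y] \in X^2$ and $[x,x',y,y',y''] \in X^5$; Duplicator configurations are $\langle x,\alpha,x',y\rangle \in X \times A \times X \times X$. Spoiler can move from $[x,y]$ to $\langle x,\alpha,x',y\rangle$ if $x \xrightarrow{\alpha} x'$, and to $\langle y,\alpha,y',x\rangle$ if $y \xrightarrow{\alpha} y'$; and from $[x,x',y,y',y'']$ to $[x,y']$ or to $[x',y'']$. Duplicator can move from $\langle x,\alpha,x',y\rangle$ to $[x,x',y,y',y'']$ if $y \Longrightarrow y' \xrightarrow{(\alpha)} y''$. A play from $[x,y]$ is a finite or infinite sequence of configurations starting at $[x,y]$, each next one a move from the previous; it is maximal if infinite or no move is possible from its last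 configuration. Spoiler wins a finite maximal play iff its last configuration is a Duplicator configuration; all other maximal plays are won by Duplicator. A (positional) Spoiler strategy maps each Spoiler configuration to a Spoiler move from it; a play is consistent with it if all Spoiler moves in the play follow the strategy. $[x,y]$ is winning for Spoiler if there is a Spoiler strategy such that every maximal play from $[x,y]$ consistent with it is won by Spoiler. *)

(* Defs.v *)
From mathcomp Require Import all_boot.
Set Implicit Arguments.
Unset Strict Implicit.
Unset Printing Implicit Defensive.

Section LTS.
Variables (X : finType) (A : Type) (step : X -> A -> X -> Prop) (tau : A).

Inductive tau_star : X -> X -> Prop :=
| tau_refl x : tau_star x x
| tau_cons x x1 x' : step x tau x1 -> tau_star x1 x' -> tau_star x x'.

Definition opt_step (x : X) (a : A) (x' : X) : Prop :=
  step x a x' \/ (a = tau /\ x = x').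

Definition branching_apartness (R : X -> X -> Prop) : Prop :=
  (forall x y, R x y -> R y x) /\
  (forall x y a x', step x a x' ->
     (forall y' y'', tau_star y y' -> opt_step y' a y'' -> R x y' \/ R x' y'') ->
     R x y).

Definition branching_apart (x y : X) : Prop :=
  forall R, branching_apartness R -> R x y.

Inductive config : Type :=
| SP2 : X -> X -> config
| SP5 : X -> X -> X -> X -> X -> config
| DUP : X -> A -> X -> X -> config.

Definition is_spoiler (c : config) : Prop :=
  match c with DUP _ _ _ _ => False | _ => True end.

Definition is_duplicator (c : config) : Prop :=
  match c with DUP _ _ _ _ => True | _ => False end.

Inductive move : config -> config -> Prop :=
| mv_left x y a x' : step x a x' -> move (SP2 x y) (DUP x a x' y)
| mv_right x y a y' : step y a y' -> move (SP2 x y) (DUP y a y' x)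
| mv_5a x x' y y' y'' : move (SP5 x x' y y' y'') (SP2 x y')
| mv_5b x x' y y' y'' : move (SP5 x x' y y' y'') (SP2 x' y'')
| mv_dup x a x' y y' y'' :
    tau_star y y' -> opt_step y' a y'' -> move (DUP x a x' y) (SP5 x x' y y' y'').

Definition spoiler_strategy (sigma : config -> config) : Prop :=
  forall c, is_spoiler c -> (exists c', move c c') -> move c (sigma c).

Definition finite_play (c0 : config) (n : nat) (p : nat -> config) : Prop :=
  p 0 = c0 /\ forall i, i < n -> move (p i) (p i.+1).

Definition finite_consistent (sigma : config -> config) (n : nat)
  (p : nat -> config) : Prop :=
  forall i, i < n -> is_spoiler (p i) -> p i.+1 = sigma (p i).

Definition finite_maximal (n : nat) (p : nat -> config) : Prop :=
  ~ (exists c', move (p n) c').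

Definition infinite_play (c0 : config) (p : nat -> config) : Prop :=
  p 0 = c0 /\ forall i, move (p i) (p i.+1).

Definition infinite_consistent (sigma : config -> config) (p : nat -> config)
  : Prop :=
  forall i, is_spoiler (p i) -> p i.+1 = sigma (p i).

(* [x,y] is winning for Spoiler: some Spoiler strategy such that every maximal
   play from [x,y] consistent with it is won by Spoiler, i.e. every finite
   maximal consistent play ends in a Duplicator configuration, and (since
   infinite plays are won by Duplicator) no infinite consistent play exists. *)
Definition spoiler_wins (x y : X) : Prop :=
  exists sigma, spoiler_strategy sigma /\
    (forall n p, finite_play (SP2 x y) n p -> finite_consistent sigma n p ->
       finite_maximal n p -> is_duplicator (p n)) /\
    (forall p, infinite_play (SP2 x y) p -> infinite_consistent sigma p -> False).

End LTS.

(* Main.v *)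
Require Import Defs.
From mathcomp Require Import all_boot.
From Stdlib Require Import Classical ClassicalEpsilon.
From mathcomp Require Import zify.

Set Implicit Arguments.
Unset Strict Implicit.
Unset Printing Implicit Defensive.

Section Proof4.
Variables (X : finType) (A : Type) (step : X -> A -> X -> Prop) (tau : A).

Local Notation cfg := (config X A).
Local Notation S2 := (@SP2 X A).
Local Notation S5 := (@SP5 X A).
Local Notation D4 := (@DUP X A).
Local Notation ts := (tau_star step tau).
Local Notation os := (opt_step step tau).
Local Notation mv := (move step tau).

Definition rule (R : X -> X -> Prop) x y := exists a x', step x a x' /\
  forall y' y'', ts y y' -> os y' a y'' -> R x y' \/ R x' y''.

Fixpoint Ap n x y := match n with
  | 0 => False
  | k.+1 => Ap k x y \/ rule (Ap k) x y \/ rule (Ap k) y x end.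

Lemma Ap_mono m n x y : m <= n -> Ap m x y -> Ap n x y.
Proof.
elim: n => [|n IH]; first by rewrite leqn0 => /eqP ->.
rewrite leq_eqVlt => /orP [/eqP -> //| Hlt] H.
by left; apply: IH.
Qed.

Lemma Ap_sym n x y : Ap n x y -> Ap n y x.
Proof.
elim: n x y => [//|n IH] x y /= [H|[H|H]]; [left; exact: IH| by right; right | by right; left].
Qed.

Lemma Ap_sub R n x y : branching_apartness step tau R -> Ap n x y -> R x y.
Proof.
move=> [Hs Hc]; elim: n x y => [//|n IH] x y /= [H|[H|H]]; first exact: IH.
- case: H => a [x' [Hst H]]; apply: (Hc _ _ a x' Hst) => y' y'' H1 H2.
  by case: (H _ _ H1 H2) => H3; [left|right]; apply: IH.
- apply: Hs; case: H => a [x' [Hst H]]; apply: (Hc _ _ a x' Hst) => y' y'' H1 H2.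
  by case: (H _ _ H1 H2) => H3; [left|right]; apply: IH.
Qed.

Lemma fin_bound (P : X * X -> nat -> Prop) (Q : X * X -> Prop) :
  (forall t m n, m <= n -> P t m -> P t n) ->
  (forall t, Q t -> exists n, P t n) -> exists N, forall t, Q t -> P t N.
Proof.
move=> Hm HQ.
suff: forall s : seq (X * X), exists N, forall t, t \in s -> Q t -> P t N.
  by case/(_ (enum (predT : pred (X * X)))) => N HN; exists N => t; apply: HN; rewrite mem_enum.
elim=> [|t s [N HN]]; first by exists 0.
case: (classic (Q t)) => Ht.
- case: (HQ t Ht) => n Hn; exists (maxn N n) => t'; rewrite in_cons => /orP [/eqP ->|Hs] Hq.
  + by apply: Hm Hn; rewrite leq_maxr.
  + by apply: Hm (HN _ Hs Hq); rewrite leq_maxl.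
- exists N => t'; rewrite in_cons => /orP [/eqP -> //|Hs] Hq; exact: HN.
Qed.

Lemma U_apart : branching_apartness step tau (fun x y => exists n, Ap n x y).
Proof.
split; first by move=> x y [n H]; exists n; apply: Ap_sym.
move=> x y a x' Hst H.
have Hm1 : forall (t : X * X) m n, m <= n -> (Ap m x t.1 \/ Ap m x' t.2) -> Ap n x t.1 \/ Ap n x' t.2.
  move=> t m n Hmn [H1|H1]; [left|right]; exact: Ap_mono H1.
have Hm2 : forall t : X * X, ts y t.1 /\ os t.1 a t.2 -> exists n, Ap n x t.1 \/ Ap n x' t.2.
  move=> [y' y''] [H1 H2] /=; case: (H _ _ H1 H2) => [[n Hn]|[n Hn]]; exists n; by [left|right].
have [N HN] := fin_bound Hm1 Hm2.
exists N.+1; right; left; exists a, x'; split => // y' y'' H1 H2.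
exact: (HN (y', y'')).
Qed.

Lemma bapart_iff x y : branching_apart step tau x y <-> exists n, Ap n x y.
Proof.
split; first by move=> H; exact: (H _ U_apart).
by move=> [n H] R HR; apply: Ap_sub H.
Qed.

Lemma min_ex (P : nat -> Prop) : (exists n, P n) -> exists n, P n /\ forall i, i < n -> ~ P i.
Proof.
move=> [n Hn]; apply: NNPP => Hno.
suff: forall k i, i < k -> ~ P i by move/(_ n.+1 n (ltnSn n)).
elim=> [//|k IH] i; rewrite ltnS leq_eqVlt => /orP [/eqP ->|Hi]; last exact: IH.
by move=> Hk; apply: Hno; exists k; split.
Qed.

Definition Q2 x y (c' : cfg) := exists k, Ap k.+1 x y /\ ~ Ap k x y /\
  ((exists a x', step x a x' /\ c' = D4 x a x' y /\
      forall y' y'', ts y y' -> os y' a y'' -> Ap k x y' \/ Ap k x' y'') \/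
   (exists a y', step y a y' /\ c' = D4 y a y' x /\
      forall x' x'', ts x x' -> os x' a x'' -> Ap k y x' \/ Ap k y' x'')).

Definition P2 x y (c' : cfg) := mv (S2 x y) c' /\ ((exists m, Ap m x y) -> Q2 x y c').

Definition cond5 x x' y' y'' := exists n, Ap n x y' /\ forall k, Ap k x' y'' -> n <= k.

Definition sigma (c : cfg) : cfg := match c with
  | SP2 x y => epsilon (inhabits c) (P2 x y)
  | SP5 x x' y y' y'' =>
      if excluded_middle_informative (cond5 x x' y' y'') then S2 x y' else S2 x' y''
  | DUP _ _ _ _ => c end.

Lemma Q2_ex m x y : Ap m x y -> exists c0, mv (S2 x y) c0 /\ Q2 x y c0.
Proof.
move=> H; have [n [Hn Hmin]] := min_ex (ex_intro (fun n => Ap n x y) m H).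
case: n Hn Hmin => [//|k] Hk Hmin.
have Hnk : ~ Ap k x y by apply: Hmin.
case: (Hk) => [//|[[a [x' [Hst Hr]]]|[a [y' [Hst Hr]]]]].
- exists (D4 x a x' y); split; first exact: mv_left.
  exists k; do 2 split => //; left; exists a, x'; by split.
- exists (D4 y a y' x); split; first exact: mv_right.
  exists k; do 2 split => //; right; exists a, y'; by split.
Qed.

Lemma P2_sigma x y m : Ap m x y -> P2 x y (sigma (S2 x y)).
Proof.
move=> H; rewrite /sigma; apply: epsilon_spec.
have [c0 [H1 H2]] := Q2_ex H; by exists c0; split.
Qed.

Lemma sigma_strat : spoiler_strategy step tau sigma.
Proof.
case=> [x y|x x' y y' y''|//] _ [c' Hc].
- rewrite /sigma; have: P2 x y (epsilon (inhabits (S2 x y)) (P2 x y)).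
    apply: epsilon_spec; case: (classic (exists m, Ap m x y)) => [[m Hm]|Hn].
    + have [c0 [H1 H2]] := Q2_ex Hm; by exists c0; split.
    + by exists c'; split.
  by case.
- rewrite /sigma; case: excluded_middle_informative => Hc5; constructor.
Qed.

Definition Inv (c : cfg) m := match c with
  | SP2 x y => Ap m x y
  | DUP u a u' v => forall v' v'', ts v v' -> os v' a v'' -> Ap m u v' \/ Ap m u' v''
  | SP5 u u' v v' v'' => Ap m u v' \/ Ap m u' v'' end.

Definition pot (c : cfg) m := match c with
  | SP2 _ _ => 3 * m | DUP _ _ _ _ => 3 * m + 2 | SP5 _ _ _ _ _ => 3 * m + 1 end.

Lemma step_inv c c' m : Inv c m -> mv c c' -> (is_spoiler c -> c' = sigma c) ->
  exists m', Inv c' m' /\ pot c' m' < pot c m.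
Proof.
case: c => [x y|u u' v v' v''|u a u' v] HI Hm Hc; simpl in HI.
- rewrite (Hc I); have [_ HQ] := P2_sigma HI.
  have := HQ (ex_intro _ m HI).
  move: (sigma (S2 x y)) => c0.
  move=> [k [_ [Hk HH]]].
  have Hkm : k < m by rewrite ltnNge; apply/negP => Hle; apply: Hk; exact: Ap_mono HI.
  case: HH => [[b [x' [_ [-> H]]]]|[b [y' [_ [-> H]]]]];
  exists k; (split; [exact: H|rewrite /=; lia]).
- rewrite (Hc I) /sigma; destruct (excluded_middle_informative _) as [Hcd|Hcd].
  + exists m; split; last by rewrite /=; lia.
    case: HI => // H; case: Hcd => n [Hn Hle]; apply: Ap_mono Hn; exact: Hle.
  + exists m; split; last by rewrite /=; lia.
    case: HI => // H; apply: NNPP => Hno; apply Hcd; exists m; split => // k Hk.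
    rewrite leqNgt; apply/negP => Hlt; apply: Hno; apply: Ap_mono Hk; exact: ltnW.
- inversion Hm; subst; exists m; split; [exact: HI|rewrite /=; lia].
Qed.

Lemma dir1 x y : (exists n, Ap n x y) -> spoiler_wins step tau x y.
Proof.
move=> [m0 H0]; exists sigma; split; first exact: sigma_strat.
split.
- move=> n p [Hp0 Hmv] Hcons Hmax.
  have Hinv : forall i, i <= n -> exists m, Inv (p i) m.
    elim=> [_|i IH Hi]; first by exists m0; rewrite Hp0.
    have [m Hm] := IH (ltnW Hi).
    have [m' [H' _]] := step_inv Hm (Hmv i Hi) (Hcons i Hi).
    by exists m'.
  have [m Hm] := Hinv n (leqnn n).
  move: Hm Hmax; rewrite /finite_maximal; case: (p n) => //= [a b|a b c d e] Hm Hmax.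
  + by case: Hmax; have [c0 [Hc0 _]] := Q2_ex Hm; exists c0.
  + by case: Hmax; exists (S2 a d); constructor.
- move=> p [Hp0 Hmv] Hcons.
  suff: forall v i m, pot (p i) m <= v -> Inv (p i) m -> False.
    by move/(_ (pot (p 0) m0) 0 m0 (leqnn _)); apply; rewrite Hp0.
  elim=> [|v IH] i m Hle HI; have [m' [H' Hlt]] := step_inv HI (Hmv i) (Hcons i).
  + by move: Hlt; rewrite ltnNge (leq_trans Hle (leq0n _)).
  + by apply: (IH i.+1 m') => //; rewrite -ltnS (leq_trans Hlt Hle).
Qed.

Definition Good (R : X -> X -> Prop) (c : cfg) := match c with
  | SP2 x y => ~ R x y
  | DUP u a u' v => step u a u' /\ ~ R u v
  | SP5 u u' v v' v'' => ~ R u v' /\ ~ R u' v'' end.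

Lemma good_dup R u a u' v : branching_apartness step tau R -> Good R (D4 u a u' v) ->
  exists c', mv (D4 u a u' v) c' /\ Good R c'.
Proof.
move=> [Hs Hc] [Hst HR]; apply: NNPP => Hno; apply: HR.
apply: (Hc _ _ a u' Hst) => v' v'' H1 H2.
case: (classic (R u v')) => H3; first by left.
case: (classic (R u' v'')) => H4; first by right.
by case: Hno; exists (S5 u u' v v' v''); split => //; constructor.
Qed.

Definition next (R : X -> X -> Prop) (s : cfg -> cfg) (c : cfg) : cfg := match c with
  | DUP _ _ _ _ => epsilon (inhabits c) (fun c' => mv c c' /\ Good R c')
  | _ => s c end.

Lemma good_next R s c : branching_apartness step tau R -> spoiler_strategy step tau s ->
  Good R c -> (exists c', mv c c') -> mv c (next R s c) /\ Good R (next R s c).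
Proof.
move=> HR Hs; case: c => [x y|u u' v v' v''|u a u' v] HG Hex.
- have Hm := Hs (S2 x y) I Hex; rewrite /next.
  move: Hm HG; move Ec: (s (S2 x y)) => c Hm HG; split => //.
  inversion Hm; subst => /=; split => //.
  by move=> H; apply: HG; case: HR => Hsy _; apply: Hsy.
- have Hm := Hs (S5 u u' v v' v'') I Hex; rewrite /next.
  move: Hm HG; move Ec: (s (S5 u u' v v' v'')) => c Hm [HG1 HG2]; split => //.
  by inversion Hm; subst.
- rewrite /next; exact: (epsilon_spec _ _ (good_dup HR HG)).
Qed.

Lemma next_sp R s c : is_spoiler c -> next R s c = s c.
Proof. by case: c. Qed.

Lemma dir2 x y : spoiler_wins step tau x y -> branching_apart step tau x y.
Proof.
move=> [s [Hs [Hfin Hinf]]] R HR; apply: NNPP => HxyR.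
pose p i := iter i (next R s) (S2 x y).
have pS i : p i.+1 = next R s (p i) by [].
case: (classic (exists n, ~ exists c', mv (p n) c')) => [Hex|Hall].
- have [n [Hn Hmin]] := min_ex Hex.
  have Hmov : forall i, i < n -> exists c', mv (p i) c'.
    by move=> i Hi; apply: NNPP; apply: Hmin.
  have HG : forall i, i <= n -> Good R (p i).
    elim=> [//|i IH Hi]; rewrite pS; exact: (good_next HR Hs (IH (ltnW Hi)) (Hmov i Hi)).2.
  have Hplay : finite_play step tau (S2 x y) n p.
    split => // i Hi; rewrite pS; exact: (good_next HR Hs (HG i (ltnW Hi)) (Hmov i Hi)).1.
  have Hcons : finite_consistent s n p by move=> i Hi Hsp; rewrite pS next_sp.
  have Hd := Hfin n p Hplay Hcons Hn.
  have := HG n (leqnn n); move: Hd Hn; case: (p n) => //= u a u' v _ Hn HGn.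
  by apply: Hn; have [c' [Hc' _]] := good_dup HR HGn; exists c'.
- have Hmov : forall i, exists c', mv (p i) c'.
    by move=> i; apply: NNPP => H; apply: Hall; exists i.
  have HG : forall i, Good R (p i).
    elim=> [//|i IH]; rewrite pS; exact: (good_next HR Hs IH (Hmov i)).2.
  apply: (Hinf p).
  + split => // i; rewrite pS; exact: (good_next HR Hs (HG i) (Hmov i)).1.
  + by move=> i Hsp; rewrite pS next_sp.
Qed.

End Proof4.

Theorem theorem4 (X : finType) (A : Type) (step : X -> A -> X -> Prop) (tau : A)
  (x y : X) :
  branching_apart step tau x y <-> spoiler_wins step tau x y.
Proof.
split; first by move/bapart_iff; apply: dir1.
exact: dir2.
Qed.
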